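(* Let $n\geq 2$, let $A\in\mathbb{R}^{n\times n}$ be a symmetric matrix and $e\in\mathbb{R}^n$ a vector. Then $$|e|^4|A|^2\geq 2|e|^2|Ae|^2+\frac{\big(|e|^2\operatorname{tr}(A)-\langle e,Ae\rangle\big)^2}{n-1}-\langle e,Ae\rangle^2.$$ If $n=2$, equality holds.
   Context: $|A|$ denotes the Hilbert–Schmidt (Frobenius) norm of $A$, $|A|^2=\operatorname{tr}(A^\intercal A)$. *)

(* Defs.v *)
From mathcomp Require Import all_boot all_order all_algebra.
From mathcomp Require Import reals.
Set Implicit Arguments. Unset Strict Implicit. Unset Printing Implicit Defensive.
Import Order.TTheory GRing.Theory Num.Theory.
Local Open Scope ring_scope.

Definition dotv (R : realType) (n : nat) (u v : 'cV[R]_n) : R :=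
  \sum_(i < n) u i 0 * v i 0.

Definition sqnormv (R : realType) (n : nat) (u : 'cV[R]_n) : R := dotv u u.

Definition sqnormHS (R : realType) (n : nat) (A : 'M[R]_n) : R := \tr (A^T *m A).

(* Main.v *)
Require Import Defs.
From mathcomp Require Import all_boot all_order all_algebra.
From mathcomp Require Import reals.
From mathcomp Require Import ring lra.
Import Order.TTheory GRing.Theory Num.Theory.
Local Open Scope ring_scope.

Lemma dotvE (R : realType) (n : nat) (u v : 'cV[R]_n) : dotv u v = (u^T *m v) 0 0.
Proof. rewrite /dotv !mxE; apply: eq_bigr => i _; by rewrite !mxE. Qed.

Lemma dotvM (R : realType) (n : nat) (u v : 'cV[R]_n) : u^T *m v = (dotv u v)%:M.
Proof. by rewrite [LHS]mx11_scalar dotvE. Qed.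

Lemma trE (R : realType) (n : nat) (e : 'cV[R]_n) (B : 'M[R]_n) :
  \tr (e *m e^T *m B) = dotv e (B *m e).
Proof.
by rewrite -mulmxA mxtrace_mulC -mulmxA dotvM mxtrace_scalar.
Qed.

Lemma EE (R : realType) (n : nat) (e : 'cV[R]_n) :
  e *m e^T *m (e *m e^T) = sqnormv e *: (e *m e^T).
Proof.
by rewrite mulmxA -(mulmxA e) dotvM mul_mx_scalar -scalemxAl.
Qed.

Lemma EAE (R : realType) (n : nat) (e : 'cV[R]_n) (A : 'M[R]_n) :
  e *m e^T *m A *m (e *m e^T) = dotv e (A *m e) *: (e *m e^T).
Proof.
by rewrite !mulmxA -(mulmxA (e *m e^T)) -(mulmxA e) dotvM mul_mx_scalar -scalemxAl.
Qed.

Lemma tr_sq_ge0 (R : realType) (n : nat) (Y : 'M[R]_n) : 0 <= \tr (Y^T *m Y).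
Proof.
rewrite /mxtrace; apply: sumr_ge0 => i _; rewrite mxE; apply: sumr_ge0 => j _.
by rewrite mxE -expr2 sqr_ge0.
Qed.

Lemma key (R : realType) (n : nat) (A : 'M[R]_n) (e : 'cV[R]_n) (hA : A^T = A) (t : R) :
  let s := sqnormv e in let d := dotv e (A *m e) in
  let Q := s%:M - e *m e^T in
  \tr ((Q *m A *m Q - t *: Q)^T *m (Q *m A *m Q - t *: Q)) =
  s^2 * (s^2 * sqnormHS A - 2 * s * sqnormv (A *m e) + d^2
         - 2 * t * (s * \tr A - d) + t^2 * (n%:R - 1)).
Proof.
move=> s d Q.
set E := e *m e^T.
have ET : E^T = E by rewrite /E trmx_mul trmxK.
have QT : Q^T = Q by rewrite /Q linearB /= tr_scalar_mx ET.
have QQ : Q *m Q = s *: Q.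
  rewrite /Q mulmxBl !mulmxBr !mul_scalar_mx mul_mx_scalar EE.
  by rewrite -/s subrr subr0 scalerBr scale_scalar_mx.
have XT : (Q *m A *m Q)^T = Q *m A *m Q by rewrite !trmx_mul QT hA mulmxA.
have YT : (Q *m A *m Q - t *: Q)^T = Q *m A *m Q - t *: Q.
  by rewrite linearB /= linearZ /= XT QT.
have trQ : \tr Q = s * n%:R - s.
  by rewrite /Q raddfB /= mxtrace_scalar /E -[e *m e^T]mulmx1 trE mul1mx mulr_natr.
have trQA : \tr (Q *m A) = s * \tr A - d.
  by rewrite /Q mulmxBl raddfB /= mul_scalar_mx mxtraceZ trE.
have trX : \tr (Q *m A *m Q) = s * (s * \tr A - d).
  by rewrite mxtrace_mulC mulmxA QQ -scalemxAl mxtraceZ trQA.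
have trQAQA : \tr (Q *m A *m Q *m A) = s^2 * sqnormHS A - 2 * s * sqnormv (A *m e) + d^2.
  have -> : Q *m A *m Q *m A = (Q *m A) *m (Q *m A) by rewrite !mulmxA.
  have -> : Q *m A = s *: A - E *m A by rewrite /Q mulmxBl mul_scalar_mx.
  rewrite mulmxBl !mulmxBr raddfB /= raddfB /= raddfB /=.
  rewrite [E *m A *m (E *m A)]mulmxA /E EAE -scalemxAl mxtraceZ trE -/d.
  rewrite -!scalemxAl -!scalemxAr !mxtraceZ [\tr (A *m (e *m e^T *m A))]mxtrace_mulC -[e *m e^T *m A *m A]mulmxA trE.
  have -> : dotv e (A *m A *m e) = sqnormv (A *m e).
    by rewrite /sqnormv !dotvE trmx_mul hA !mulmxA.
  rewrite /sqnormHS hA; ring.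
have trX2 : \tr (Q *m A *m Q *m (Q *m A *m Q)) = s^2 * \tr (Q *m A *m Q *m A).
  rewrite !mulmxA -(mulmxA (Q *m A)) QQ -scalemxAr -!scalemxAl mxtraceZ.
  rewrite mxtrace_mulC !mulmxA QQ -!scalemxAl mxtraceZ; ring.
clearbody Q.
rewrite YT mulmxBl !mulmxBr -!scalemxAl -!scalemxAr.
rewrite !raddfB /= !mxtraceZ trX2 trQAQA [\tr (Q *m (Q *m A *m Q))]mxtrace_mulC.
rewrite -[Q *m A *m Q *m Q]mulmxA QQ -scalemxAr mxtraceZ trX mxtraceZ trQ; ring.
Qed.


Theorem lemma2p1 (R : realType) (n : nat) (hn : (2 <= n)%N)
    (A : 'M[R]_n) (e : 'cV[R]_n) (hA : A^T = A) :
  let eAe := dotv e (A *m e) in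
  (sqnormv e) ^+ 2 * sqnormHS A >=
    2 * sqnormv e * sqnormv (A *m e)
    + (sqnormv e * \tr A - eAe) ^+ 2 / (n%:R - 1)
    - eAe ^+ 2
  /\ (n = 2%N ->
    (sqnormv e) ^+ 2 * sqnormHS A =
    2 * sqnormv e * sqnormv (A *m e)
    + (sqnormv e * \tr A - eAe) ^+ 2 / (n%:R - 1)
    - eAe ^+ 2).
Proof.
move=> d; split.
  set s := sqnormv e.
  set N : R := n%:R - 1.
  have hN : 1 <= N.
    have h2 : (2%:R : R) <= n%:R by rewrite ler_nat.
    rewrite /N; lra.
  set c := N^-1.
  have hcN : c * N = 1 by rewrite /c mulVf // gt_eqF // (lt_le_trans ltr01).
  have hc0 : 0 < c by rewrite /c invr_gt0 (lt_le_trans ltr01).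
  have hc1 : c <= 1 by rewrite /c invf_le1 // (lt_le_trans ltr01).
  set D := s * \tr A - d.
  pose Q : 'M[R]_n := s%:M - e *m e^T.
  have := tr_sq_ge0 _ _ (Q *m A *m Q - (D * c) *: Q).
  rewrite /Q.
  rewrite (key _ _ _ _ hA) -/s -/d -/D -/N => H.
  have hK : 0 <= s ^ 2 * sqnormHS A - 2 * s * sqnormv (A *m e) + d ^ 2 - D^2 * c.
    have [s0|s0] := eqVneq s 0.
      rewrite /D s0; nra.
    have hs2 : 0 < s ^ 2 by rewrite exprn_even_gt0.
    have := H; rewrite pmulr_rge0 //.
    have e1 : (D * c) ^ 2 * N = D ^ 2 * c.
      have -> : (D * c) ^ 2 * N = D ^ 2 * c * (c * N) by ring.
      by rewrite hcN mulr1.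
    rewrite e1 => H'.
    have -> : s ^ 2 * sqnormHS A - 2 * s * sqnormv (A *m e) + d ^ 2 - D ^ 2 * c
      = s ^ 2 * sqnormHS A - 2 * s * sqnormv (A *m e) + d ^ 2 - 2 * (D * c) * D + D ^ 2 * c by ring.
    exact: H'.
  rewrite /=; lra.
move=> n2; subst n.
have h := congr1 (fun M : 'M[R]_2 => M ord0 (lift ord0 ord0)) hA.
rewrite /= mxE in h.
have -> : (2%:R - 1 : R) = 1 by rewrite (natrD R 1 1) addrK.
rewrite divr1 /d /sqnormHS /sqnormv /dotv /mxtrace.
rewrite !(mxE, big_ord_recl, big_ord0).
rewrite -h.
ring.
Qed.
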